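(* Let $\mathcal H$ be a family of graphs. The following are equivalent: (i) there are constants $c_1=c_1(\mathcal H)$ and $c_2=c_2(\mathcal H)$ such that every $\mathcal H$-free graph $G$ has fewer than $c_2$ vertices of degree at least $c_1$; (ii) there is a positive integer $n$ such that $\mathcal H\le\{K_n,\ K_{n,n},\ nK_{1,n}\}$.
   Context: All graphs are finite, simple, undirected. For graphs $H_1,H_2$, write $H_1\prec H_2$ if $H_2$ contains an induced subgraph isomorphic to $H_1$. A graph $G$ is $\mathcal H$-free if no $H\in\mathcal H$ satisfies $H\prec G$. For families $\mathcal H_1,\mathcal H_2$, write $\mathcal H_1\le\mathcal H_2$ if for every $H_2\in\mathcal H_2$ there is $H_1\in\mathcal H_1$ with $H_1\prec H_2$. $K_n$ is the complete graph, $K_{s,t}$ the complete bipartite graph, and $nG$ the disjoint union of $n$ copies of $G$. *)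

(* Defs.v *)
From mathcomp Require Import all_boot.
Set Implicit Arguments. Unset Strict Implicit. Unset Printing Implicit Defensive.

Record sgraph := SGraph {
  vert :> finType;
  adj : rel vert;
  adj_sym : symmetric adj;
  adj_irr : irreflexive adj }.

Definition induced_sub (H1 H2 : sgraph) : Prop :=
  exists f : vert H1 -> vert H2, injective f /\
    forall x y : vert H1, adj (f x) (f y) = adj x y.

Definition gfamily := sgraph -> Prop.

Definition H_free (F : gfamily) (G : sgraph) : Prop :=
  forall H, F H -> ~ induced_sub H G.

Definition fam_le (F1 F2 : gfamily) : Prop :=
  forall H2, F2 H2 -> exists2 H1, F1 H1 & induced_sub H1 H2.

Definition deg (G : sgraph) (v : vert G) : nat := #|[set u | adj v u]|.

Definition Kn_adj n : rel 'I_n := fun x y => x != y.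
Lemma Kn_sym n : symmetric (@Kn_adj n). Proof. by move=> x y; rewrite /Kn_adj eq_sym. Qed.
Lemma Kn_irr n : irreflexive (@Kn_adj n). Proof. by move=> x; rewrite /Kn_adj eqxx. Qed.
Definition K_ (n : nat) : sgraph := SGraph (@Kn_sym n) (@Kn_irr n).

Definition Kst_adj s t : rel ('I_s + 'I_t)%type := fun x y =>
  match x, y with inl _, inr _ | inr _, inl _ => true | _, _ => false end.
Lemma Kst_sym s t : symmetric (@Kst_adj s t). Proof. by case=> ? [] ?. Qed.
Lemma Kst_irr s t : irreflexive (@Kst_adj s t). Proof. by case. Qed.
Definition K2_ (s t : nat) : sgraph := SGraph (@Kst_sym s t) (@Kst_irr s t).

(* m K_{1,t}: vertices (i, None) are the centres, (i, Some k) the leaves of copy i. *)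
Definition mstar_adj m t : rel ('I_m * option 'I_t)%type := fun x y =>
  (x.1 == y.1) && ((x.2 == None) != (y.2 == None)).
Lemma mstar_sym m t : symmetric (@mstar_adj m t).
Proof. by move=> x y; rewrite /mstar_adj eq_sym; congr (_ && _); case: (_ == None); case: (_ == None). Qed.
Lemma mstar_irr m t : irreflexive (@mstar_adj m t).
Proof. by move=> x; rewrite /mstar_adj eqxx /=; case: (_ == None). Qed.
Definition mK1_ (m t : nat) : sgraph := SGraph (@mstar_sym m t) (@mstar_irr m t).

Definition special_family (n : nat) : gfamily :=
  fun G => G = K_ n \/ G = K2_ n n \/ G = mK1_ n n.

(* Main.v *)
Require Import Defs.
From Stdlib Require Import Classical.
From mathcomp Require Import all_boot zify.
Set Implicit Arguments. Unset Strict Implicit. Unset Printing Implicit Defensive.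

Lemma card_bigcup_le (T I : finType) (A : {pred I}) (F : I -> {set T}) :
  #|\bigcup_(i in A) F i| <= \sum_(i in A) #|F i|.
Proof.
elim/big_rec2: _ => [|i n U _ le]; first by rewrite cards0.
by rewrite (leq_trans (leq_card_setU (F i) U).1) ?leq_add2l.
Qed.

Lemma subset_card (T : finType) (A : {set T}) k :
  k <= #|A| -> exists2 B : {set T}, B \subset A & #|B| = k.
Proof.
elim: k => [|k IH] hk; first by exists set0; rewrite ?sub0set ?cards0.
have [B BA cB] := IH (ltnW hk).
have : 0 < #|A :\: B| by rewrite cardsD (setIidPr BA) cB subn_gt0.
case/card_gt0P => x; rewrite inE => /andP[xB xA].
exists (x |: B); first by rewrite subUset sub1set xA BA.
by rewrite cardsU1 xB cB.
Qed.

Lemma ind_trans (H1 H2 H3 : sgraph) :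
  induced_sub H1 H2 -> induced_sub H2 H3 -> induced_sub H1 H3.
Proof.
move=> [f [fi fa]] [g [gi ga]]; exists (g \o f); split; first exact: inj_comp.
by move=> x y /=; rewrite ga fa.
Qed.

Lemma easy (F : gfamily) c1 c2 :
  (forall G : sgraph, H_free F G -> #|[set v : vert G | c1 <= deg v]| < c2) ->
  fam_le F (special_family (c1 + c2).+1).
Proof.
set N := (c1 + c2).+1 => H H2 hH2.
case: (classic (exists2 H1, F H1 & induced_sub H1 H2)) => // hn.
exfalso.
have hf : H_free F H2 by move=> H0 hF hi; apply: hn; exists H0.
have := H H2 hf; apply/negP; rewrite -leqNgt.
case: hH2 => [->|[->|->]].
- have -> : [set v : vert (K_ N) | c1 <= deg v] = setT.
    apply/setP => v; rewrite !inE /deg.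
    have -> : [set u : vert (K_ N) | adj v u] = [set~ v].
      by apply/setP => u; rewrite !inE /= /Kn_adj eq_sym.
    by rewrite cardsC1 /= card_ord /N; lia.
  by rewrite cardsT /= card_ord /N; lia.
- have sub : [set inl i | i in [set: 'I_N]] \subset [set v : vert (K2_ N N) | c1 <= deg v].
    apply/subsetP => x /imsetP[i _ ->]; rewrite inE /deg.
    have : [set inr j | j in [set: 'I_N]] \subset [set u : vert (K2_ N N) | adj (inl i : vert (K2_ N N)) u].
      by apply/subsetP => y /imsetP[j _ ->]; rewrite inE.
    move/subset_leq_card; rewrite card_imset; last by move=> a b [].
    rewrite cardsT card_ord /N => h; apply: (leq_trans _ (ltnW h)); exact: leq_addr.
  have := subset_leq_card sub; rewrite card_imset; last by move=> a b [].
  rewrite cardsT card_ord /N => h; apply: (leq_trans _ h); lia.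
- have sub : [set (i, None) | i in [set: 'I_N]] \subset [set v : vert (mK1_ N N) | c1 <= deg v].
    apply/subsetP => x /imsetP[i _ ->]; rewrite inE /deg.
    have : [set (i, Some j) | j in [set: 'I_N]] \subset [set u : vert (mK1_ N N) | adj ((i, None) : vert (mK1_ N N)) u].
      by apply/subsetP => y /imsetP[j _ ->]; rewrite inE /= /mstar_adj /= eqxx.
    move/subset_leq_card; rewrite card_imset; last by move=> a b [].
    rewrite cardsT card_ord /N => h; apply: (leq_trans _ (ltnW h)); exact: leq_addr.
  have := subset_leq_card sub; rewrite card_imset; last by move=> a b [].
  rewrite cardsT card_ord /N => h; apply: (leq_trans _ h); lia.
Qed.




Lemma avg (T : finType) (P : {set T}) (D : T -> T -> bool) k :
  P != set0 -> (forall u, u \in P -> #|[set x in P | D x u]| < k) ->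
  exists2 v, v \in P & #|[set u in P | D v u]| < k.
Proof.
move=> P0 hu.
have cardE (f : T -> bool) : #|[set u in P | f u]| = \sum_(u in P) f u.
  rewrite -sum1_card big_mkcond /= [RHS]big_mkcond /=.
  by apply: eq_bigr => u _; rewrite !inE; case: (u \in P); case: (f u).
apply: NNPP => hn.
have hall : forall v, v \in P -> k <= #|[set u in P | D v u]|.
  by move=> v vP; rewrite leqNgt; apply/negP => h; apply: hn; exists v.
have e1 : \sum_(v in P) k <= \sum_(v in P) \sum_(u in P) D v u.
  by apply: leq_sum => v vP; rewrite -cardE; exact: hall.
have e2 : \sum_(u in P) \sum_(v in P) D v u <= \sum_(u in P) k.-1.
  apply: leq_sum => u uP; rewrite -cardE; have := hu u uP; lia.
rewrite exchange_big /= in e1.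
have := leq_trans e1 e2; rewrite !sum_nat_const.
have : 0 < #|P| by rewrite card_gt0.
case/set0Pn: P0 => u uP; have := hu u uP.
nia.
Qed.


Section Core.
Variable G : sgraph.
Local Notation V := (vert G).

Definition clique (C : {set V}) := forall x y, x \in C -> y \in C -> x != y -> adj x y.
Definition indep (I : {set V}) := forall x y, x \in I -> y \in I -> ~~ adj x y.

Lemma ramsey a b (S : {set V}) : 2 ^ (a + b) <= #|S| ->
  (exists2 C : {set V}, C \subset S & clique C /\ a <= #|C|) \/
  (exists2 I : {set V}, I \subset S & indep I /\ b <= #|I|).
Proof.
elim: a b S => [|a IHa] b S hS.
  by left; exists set0; rewrite ?sub0set //; split=> // x y; rewrite inE.
elim: b S hS => [|b IHb] S hS.
  by right; exists set0; rewrite ?sub0set //; split=> // x y; rewrite inE.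
have : 0 < #|S| by apply: leq_trans hS; rewrite expn_gt0.
case/card_gt0P => x xS.
set S' := S :\ x.
set Nx := S' :&: [set y | adj x y].
set Mx := S' :\: [set y | adj x y].
have cS : #|S| = #|S'| + 1 by rewrite (cardsD1 x S) xS addnC.
have cS' : #|Nx| + #|Mx| = #|S'| by rewrite cardsID.
have eX : 2 ^ (a.+1 + b.+1) = 2 ^ (a + b.+1) + 2 ^ (a.+1 + b).
  by rewrite addSn addnS !expnS; lia.
have NxS : Nx \subset S by apply/subsetP => y; rewrite !inE => /andP[/andP[_ ->]].
have MxS : Mx \subset S by apply/subsetP => y; rewrite !inE => /andP[_ /andP[_ ->]].
have [big|big] : 2 ^ (a + b.+1) <= #|Nx| \/ 2 ^ (a.+1 + b) <= #|Mx|.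
- have e2 : 2 ^ (a + b.+1) = 2 ^ (a.+1 + b) by rewrite addSn addnS.
  lia.
- case: (IHa b.+1 Nx big) => [[C CN [cC hC]]|[I IN [iI hI]]]; last first.
    by right; exists I => //; apply: subset_trans NxS.
  left; exists (x |: C).
    by rewrite subUset sub1set xS (subset_trans CN NxS).
  have xC : x \notin C.
    by apply/negP => /(subsetP CN); rewrite !inE eqxx.
  split; last by rewrite cardsU1 xC.
  move=> y z; rewrite !inE => /orP[/eqP->|yC] /orP[/eqP->|zC]; rewrite ?eqxx //.
  + by move=> _; have := subsetP CN z zC; rewrite !inE => /andP[_ ->].
  + move=> _; have := subsetP CN y yC; rewrite !inE => /andP[_ h].
    by rewrite adj_sym.
  + exact: cC.
- case: (IHb Mx big) => [[C CN [cC hC]]|[I IN [iI hI]]].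
    by left; exists C => //; apply: subset_trans MxS.
  right; exists (x |: I).
    by rewrite subUset sub1set xS (subset_trans IN MxS).
  have xI : x \notin I.
    by apply/negP => /(subsetP IN); rewrite /Mx /S' !inE eqxx /= andbF.
  split; last by rewrite cardsU1 xI.
  move=> y z; rewrite !inE => /orP[/eqP->|yC] /orP[/eqP->|zC].
  + by rewrite adj_irr.
  + by have := subsetP IN z zC; rewrite !inE => /andP[h _].
  + by have := subsetP IN y yC; rewrite !inE adj_sym => /andP[h _].
  + exact: iI.
Qed.

End Core.


Section Core2.
Variable G : sgraph.
Local Notation V := (vert G).
Variables (t p0 : nat).
Hypothesis HK : forall X Y : {set V}, t <= #|X| -> t <= #|Y| ->
  (forall x y, x \in X -> y \in Y -> adj x y) -> False.

Definition Nc (x : V) : {set V} := [set y | (y == x) || adj x y].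
Definition sepv (x y : V) := y \notin Nc x.

Lemma sepvC x y : sepv x y = sepv y x.
Proof. by rewrite /sepv !inE eq_sym adj_sym. Qed.

Lemma t_pos : 0 < t.
Proof.
rewrite lt0n; apply/negP => /eqP t0.
by apply: (HK (X := set0) (Y := set0)); rewrite ?t0 // => x y; rewrite inE.
Qed.

Lemma dom_few (Y : {set V}) s : t * s.+1 <= #|Y| ->
  #|[set x | #|Y :\: Nc x| < s]| < t.
Proof.
case: s => [|s] hY.
  have -> : [set x | #|Y :\: Nc x| < 0] = set0 by apply/setP => x; rewrite !inE.
  by rewrite cards0 t_pos.
rewrite ltnNge; apply/negP => hD.
have [X XD cX] := subset_card hD.
set B := \bigcup_(x in X) (Y :\: Nc x).
set Z := (Y :\: X) :\: B.
have hsum : \sum_(x in X) #|Y :\: Nc x| <= \sum_(x in X) s.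
  apply: leq_sum => x xX; have := subsetP XD x xX; rewrite inE; lia.
rewrite sum_nat_const cX in hsum.
have hB : #|B| <= \sum_(x in X) #|Y :\: Nc x| by exact: card_bigcup_le.
have hYs : Y \subset Z :|: X :|: B.
  apply/subsetP => y yY; rewrite /Z !inE yY /=.
  by case: (y \in X); case: (y \in B).
have e1 := subset_leq_card hYs.
have e2 := (leq_card_setU (Z :|: X) B).1.
have e3 := (leq_card_setU Z X).1.
have hZ : t <= #|Z| by clearbody B Z; nia.
apply: (HK (X := X) (Y := Z)); first by rewrite cX.
  by [].
move=> x y xX; rewrite /Z !inE => /andP[yB /andP[yX yY]].
have : y \notin Y :\: Nc x.
  by apply: contra yB => h; apply/bigcupP; exists x.
rewrite !inE yY andbT negbK => /orP[/eqP yx|//].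
by move: yX; rewrite yx xX.
Qed.


Fixpoint hh j := if j is j'.+1 then t * (hh j').+1 else 1.
Fixpoint gg j := if j is j'.+1 then t * (gg j').+1 else t * (p0 + 2) + 1.

Lemma gg_mono j : gg 0 <= gg j.
Proof.
elim: j => [//|j IH] /=; apply: leq_trans IH _.
have := t_pos; nia.
Qed.

Definition state lev (P : {set V}) (M : V -> {set V}) : Prop :=
  [/\ indep P, #|P| <= p0, hh lev <= #|P|,
      forall u, u \in P -> gg lev <= #|M u| &
      forall u y, u \in P -> y \in M u -> adj u y].

Lemma leaf1 lev P M (R : {set V}) : state lev.+1 P M -> gg lev.+1 <= #|R| ->
  exists2 l, l \in R & [/\ hh lev <= #|P :\: Nc l|, gg lev <= #|R :\: Nc l| &
     forall u, u \in P -> gg lev <= #|M u :\: Nc l|].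
Proof.
move=> [iP Pp0 hP hM aM] hR.
set B1 := [set x | #|P :\: Nc x| < hh lev].
set B2 := [set x | #|R :\: Nc x| < gg lev].
set B3 := \bigcup_(u in P) [set x | #|M u :\: Nc x| < gg lev].
have c1 : #|B1| < t by apply: dom_few.
have c2 : #|B2| < t by apply: dom_few.
have c3 : #|B3| <= #|P| * t.-1.
  apply: leq_trans (card_bigcup_le _ _) _; rewrite -sum_nat_const.
  apply: leq_sum => u uP; have : #|[set x | #|M u :\: Nc x| < gg lev]| < t.
    by apply: dom_few; apply: hM.
  lia.
have e1 := (leq_card_setU (B1 :|: B2) B3).1.
have e2 := (leq_card_setU B1 B2).1.
have g0 := gg_mono lev.+1.
have tp := t_pos.
have : #|B1 :|: B2 :|: B3| < #|R|.
  apply: leq_trans hR; apply: leq_trans g0; rewrite /=.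
  clearbody B1 B2 B3; nia.
move=> hlt.
have : 0 < #|R :\: (B1 :|: B2 :|: B3)|.
  rewrite cardsD; have := subset_leq_card (subsetIr R (B1 :|: B2 :|: B3)).
  lia.
case/card_gt0P => l; rewrite inE => /andP[lB lR].
exists l => //; move: lB; rewrite !inE => /norP[/norP[h1 h2] h3]; rewrite -!leqNgt in h1 h2.
split => // u uP; move: h3; apply: contraR; rewrite -ltnNge => h.
by apply/bigcupP; exists u => //; rewrite inE.
Qed.


Lemma state_sub lev lev' P M (P' : {set V}) (M' : V -> {set V}) :
  state lev P M -> P' \subset P -> (forall u, u \in P' -> M' u \subset M u) ->
  hh lev' <= #|P'| -> (forall u, u \in P' -> gg lev' <= #|M' u|) ->
  state lev' P' M'.
Proof.
move=> [iP Pp0 hP hM aM] sP sM h1 h2; split => //.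
- by move=> x y /(subsetP sP) xP /(subsetP sP) yP; apply: iP.
- exact: leq_trans (subset_leq_card sP) Pp0.
- by move=> u y uP yM; apply: aM (subsetP sP u uP) (subsetP (sM u uP) y yM).
Qed.

Lemma leaves lev j : forall P M (R : {set V}), state (lev + j) P M -> gg (lev + j) <= #|R| ->
  exists L (P' : {set V}) (M' : V -> {set V}), size L = j /\ uniq L /\ (forall a, a \in L -> a \in R) /\
    (forall a b, a \in L -> b \in L -> ~~ adj a b) /\
    (P' \subset P /\ (forall u, u \in P' -> M' u \subset M u)) /\
    (forall a y, a \in L -> y \in P' -> sepv a y) /\
    (forall a u y, a \in L -> u \in P' -> y \in M' u -> sepv a y) /\
    state lev P' M'.
Proof.
elim: j => [|j IH] P M R.
  move=> st _; exists [::], P, M; rewrite addn0 in st.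
  do 4 (split; first by []); split; first by split=> // u _.
  by do 2 (split; first by []).
rewrite addnS => st hR.
have [l lR [h1 h2 h3]] := leaf1 st hR.
set P1 := P :\: Nc l; set M1 := fun u => M u :\: Nc l; set R1 := R :\: Nc l.
have st1 : state (lev + j) P1 M1.
  apply: (state_sub st); rewrite ?subsetDl // => u.
    by move=> _; rewrite subsetDl.
  by rewrite inE => /andP[_ uP]; apply: h3.
have [L [P' [M' [sL [uL [LR [adjL [[sP sM] [sepP [sepM stf]]]]]]]]]] := IH P1 M1 R1 st1 h2.
exists (l :: L), P', M'; split; [|split; [|split; [|split; [|split; [|split; [|split]]]]]] => //.
- by rewrite /= sL.
- rewrite /= uL andbT; apply/negP => /LR; rewrite !inE eqxx.
  by [].
- by move=> a; rewrite inE => /orP[/eqP->|/LR]; rewrite // !inE => /andP[].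
- have nl b : b \in L -> ~~ adj l b.
    by move/LR; rewrite !inE negb_or => /andP[/andP[_ ->]].
  move=> a b; rewrite !inE => /orP[/eqP->|aL] /orP[/eqP->|bL].
  + by rewrite adj_irr.
  + exact: nl.
  + by rewrite adj_sym; apply: nl.
  + exact: adjL.
- split; first by apply: subset_trans sP _; rewrite subsetDl.
  move=> u uP'; apply: subset_trans (sM u uP') _; rewrite subsetDl.
  by [].
- move=> a y; rewrite inE => /orP[/eqP->|aL] yP; last exact: sepP.
  by have := subsetP sP y yP; rewrite /sepv inE => /andP[].
- move=> a u y; rewrite inE => /orP[/eqP->|aL] uP yM; last exact: sepM yM.
  by have := subsetP (sM u uP) y yM; rewrite /sepv inE => /andP[].
Qed.


Lemma center lev P M : state lev.+1 P M ->
  exists2 v, v \in P &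
    state lev ((P :\ v) :\: [set u | #|M u :\: Nc v| < gg lev]) (fun u => M u :\: Nc v)
    /\ gg lev <= #|M v|.
Proof.
move=> st; have [iP Pp0 hP hM aM] := st.
set D := fun x u => #|M u :\: Nc x| < gg lev.
have P0 : P != set0.
  rewrite -card_gt0; apply: leq_trans hP; rewrite /=; have := t_pos; nia.
have [v vP hv] : exists2 v, v \in P & #|[set u in P | D v u]| < t.
  apply: avg => // u uP; apply: leq_ltn_trans (dom_few (hM u uP)).
  by apply: subset_leq_card; apply/subsetP => x; rewrite !inE => /andP[].
exists v => //; split; last first.
  by apply: leq_trans (hM v vP); rewrite /=; have := t_pos; nia.
apply: (state_sub st).
- by apply: subset_trans (subsetDl _ _) (subsetDl _ _).
- by move=> u _; rewrite subsetDl.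
- rewrite cardsD.
  have : (P :\ v) :&: [set u | #|M u :\: Nc v| < gg lev] \subset [set u in P | D v u].
    by apply/subsetP => u; rewrite !inE => /andP[/andP[_ ->] h].
  move/subset_leq_card => h.
  have := cardsD1 v P; rewrite vP /= => cP.
  move: hP; rewrite /= => hP'.
  have := t_pos; nia.
- move=> u; rewrite !inE => /andP[hu /andP[_ uP]].
  by rewrite leqNgt.
Qed.

Definition star_ok n (v : V) (L : seq V) :=
  size L = n /\ uniq L /\ (forall a, a \in L -> adj v a) /\
  (forall a b, a \in L -> b \in L -> ~~ adj a b).

Lemma star n lev P M : state (lev + n).+1 P M ->
  exists v L (P' : {set V}) (M' : V -> {set V}),
    v \in P /\ star_ok n v L /\ {subset L <= M v} /\ P' \subset P /\
    (forall u, u \in P' -> M' u \subset M u) /\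
    (forall x y, x \in v :: L -> y \in P' -> sepv x y) /\
    (forall x u y, x \in v :: L -> u \in P' -> y \in M' u -> sepv x y) /\
    state lev P' M'.
Proof.
move=> st; have [iP Pp0 hP hM aM] := st.
have [v vP [st1 hv]] := center st.
have [L [P' [M' [sL [uL [LR [adjL [[sP sM] [sepP [sepM stf]]]]]]]]]] := leaves st1 hv.
exists v, L, P', M'.
have sP1 : P' \subset P by apply: subset_trans sP (subset_trans (subsetDl _ _) (subsetDl _ _)).
split => //; split; first by do 2 (split => //); split => // a aL; apply: aM vP (LR a aL).
split => //; split => //; split.
  by move=> u uP; apply: subset_trans (sM u uP) _; rewrite subsetDl.
split; last split => //.
- move=> x y; rewrite inE => /orP[/eqP->|xL] yP; last exact: sepP.
  have := subsetP sP y yP; rewrite !inE => /andP[_ /andP[yv yP0]].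
  by rewrite /sepv !inE negb_or yv /= iP.
- move=> x u y; rewrite inE => /orP[/eqP->|xL] uP yM; last exact: sepM yM.
  by have := subsetP (sM u uP) y yM; rewrite /sepv inE => /andP[].
Qed.



Fixpoint Good n (st : seq (V * seq V)) : Prop :=
  if st is p :: st' then
    star_ok n p.1 p.2 /\ Good n st' /\
    (forall x y, x \in p.1 :: p.2 -> y \in flatten [seq q.1 :: q.2 | q <- st'] -> sepv x y)
  else True.

Lemma stars n k : forall P M, state (k * n.+1) P M ->
  exists st, size st = k /\ Good n st /\
    (forall p, p \in st -> p.1 \in P /\ {subset p.2 <= M p.1}).
Proof.
elim: k => [|k IH] P M st0; first by exists [::].
have e : k.+1 * n.+1 = (k * n.+1 + n).+1 by rewrite mulSn; lia.
rewrite e in st0.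
have [v [L [P' [M' [vP [sok [LM [sP [sM [sepP [sepM st']]]]]]]]]]] := star st0.
have [st [sz [gd sup]]] := IH P' M' st'.
exists ((v, L) :: st); split; first by rewrite /= sz.
split; first split => //; first split => //.
- move=> x y xv /flattenP[s /mapP[q qst ->] yq].
  have [q1 q2] := sup q qst.
  move: yq; rewrite inE => /orP[/eqP->|yq2]; first exact: sepP.
  exact: sepM q1 (q2 _ yq2).
- move=> p; rewrite inE => /orP[/eqP->|pst]; first by [].
  have [p1 p2] := sup p pst; split; first exact: subsetP sP _ p1.
  by move=> y /p2; apply/subsetP/sM.
Qed.


Lemma good_nth n st d i : Good n st -> i < size st -> star_ok n (nth d st i).1 (nth d st i).2.
Proof.
elim: st i => [//|p st IH] [|i] /= [sok [gd _]] hi //; exact: IH.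
Qed.

Lemma good_sep n st d : Good n st -> forall i j, i < size st -> j < size st -> i != j ->
  forall x y, x \in (nth d st i).1 :: (nth d st i).2 ->
  y \in (nth d st j).1 :: (nth d st j).2 -> sepv x y.
Proof.
elim: st => [//|p st IH] /= [sok [gd sp]] [|i] [|j] //= hi hj hij x y hx hy.
- apply: sp hx _; apply/flattenP; exists ((nth d st j).1 :: (nth d st j).2) => //.
  by apply/mapP; exists (nth d st j) => //; apply: mem_nth.
- rewrite sepvC; apply: sp hy _; apply/flattenP; exists ((nth d st i).1 :: (nth d st i).2) => //.
  by apply/mapP; exists (nth d st i) => //; apply: mem_nth.
- exact: IH hx hy.
Qed.

Lemma sepv_neq x y : sepv x y -> x != y /\ ~~ adj x y.
Proof. by rewrite /sepv inE negb_or eq_sym => /andP[]. Qed.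

Lemma good_embed n st (x0 : V) : Good n st -> size st = n -> induced_sub (mK1_ n n) G.
Proof.
move=> gd sz.
pose d := (x0, [::] : seq V).
pose f := fun (z : 'I_n * option 'I_n) =>
  match z.2 with None => (nth d st z.1).1 | Some a => nth x0 (nth d st z.1).2 a end.
have ok (i : 'I_n) : star_ok n (nth d st i).1 (nth d st i).2.
  by apply: (good_nth d gd); rewrite sz ltn_ord.
have memf (z : 'I_n * option 'I_n) : f z \in (nth d st z.1).1 :: (nth d st z.1).2.
  case: z => i [a|] /=; rewrite /f /= inE ?eqxx //.
  apply/orP; right; apply: mem_nth; have [-> _] := ok i; exact: ltn_ord.
have cross (z1 z2 : 'I_n * option 'I_n) : z1.1 != z2.1 -> f z1 != f z2 /\ ~~ adj (f z1) (f z2).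
  move=> ne; apply: sepv_neq; apply: (good_sep gd _ _ ne (memf z1) (memf z2)); by rewrite sz ltn_ord.
exists (f : vert (mK1_ n n) -> V); split.
- move=> [i1 o1] [i2 o2] e.
  case: (eqVneq i1 i2) => [ei|ne]; last first.
    by have [h _] := cross (i1, o1) (i2, o2) ne; rewrite e eqxx in h.
  subst i2; have [sL [uL [aL _]]] := ok i1.
  have mL (a : 'I_n) : nth x0 (nth d st i1).2 a \in (nth d st i1).2 by apply: mem_nth; rewrite sL ltn_ord.
  move: e; rewrite /f /=; case: o1 => [a1|]; case: o2 => [a2|] //= e.
  + have ea : a1 = a2.
      by apply/val_inj/eqP; rewrite -(nth_uniq x0 _ _ uL) ?sL ?ltn_ord //; apply/eqP.
    by rewrite ea.
  + by have := aL _ (mL a1); rewrite e adj_irr.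
  + by have := aL _ (mL a2); rewrite -e adj_irr.
- move=> [i1 o1] [i2 o2]; rewrite /= /mstar_adj /=.
  case: (eqVneq i1 i2) => [ei|ne]; last by have [_ h] := cross (i1, o1) (i2, o2) ne; apply/negbTE.
  subst i2; have [sL [uL [aL nL]]] := ok i1.
  have mL (a : 'I_n) : nth x0 (nth d st i1).2 a \in (nth d st i1).2 by apply: mem_nth; rewrite sL ltn_ord.
  rewrite /f /=; case: o1 => [a1|]; case: o2 => [a2|] /=.
  + exact/negbTE/nL.
  + by rewrite adj_sym aL.
  + by rewrite aL.
  + by rewrite adj_irr.
Qed.

End Core2.


Lemma clique_emb (G : sgraph) n (C : {set vert G}) : clique C -> n <= #|C| -> induced_sub (K_ n) G.
Proof.
move=> cC hn; have [C' sC cC'] := subset_card hn.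
pose f := fun i : 'I_n => enum_val (cast_ord (esym cC') i) : vert G.
have finj : injective f by move=> i j /enum_val_inj /cast_ord_inj.
exists (f : vert (K_ n) -> vert G); split => // i j /=.
rewrite /Kn_adj; case: (eqVneq i j) => [->|ne]; first by rewrite adj_irr.
apply: cC; try exact: (subsetP sC _ (enum_valP _)).
by apply: contra ne => /eqP /finj ->.
Qed.

Lemma bip_emb (G : sgraph) n (I J : {set vert G}) : indep I -> indep J -> n <= #|I| -> n <= #|J| ->
  (forall x y, x \in I -> y \in J -> adj x y) -> induced_sub (K2_ n n) G.
Proof.
move=> iI iJ hI hJ comp.
have [I' sI cI] := subset_card hI; have [J' sJ cJ] := subset_card hJ.
pose fI := fun i : 'I_n => enum_val (cast_ord (esym cI) i) : vert G.
pose fJ := fun i : 'I_n => enum_val (cast_ord (esym cJ) i) : vert G.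
have mI i : fI i \in I by apply: (subsetP sI _ (enum_valP _)).
have mJ i : fJ i \in J by apply: (subsetP sJ _ (enum_valP _)).
pose f := fun z : 'I_n + 'I_n => match z with inl i => fI i | inr j => fJ j end.
exists (f : vert (K2_ n n) -> vert G); split.
- move=> [i|i] [j|j] /= e.
  + by congr inl; move: e => /enum_val_inj /cast_ord_inj.
  + by have := comp _ _ (mI i) (mJ j); rewrite e adj_irr.
  + by have := comp _ _ (mI j) (mJ i); rewrite e adj_irr.
  + by congr inr; move: e => /enum_val_inj /cast_ord_inj.
- move=> [i|i] [j|j] /=.
  + exact/negbTE/iI.
  + exact: comp.
  + by rewrite adj_sym; apply: comp.
  + exact/negbTE/iJ.
Qed.

Lemma hard n : exists c1 c2, forall G : sgraph, ~ induced_sub (K_ n) G ->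
  ~ induced_sub (K2_ n n) G -> ~ induced_sub (mK1_ n n) G ->
  #|[set v : vert G | c1 <= deg v]| < c2.
Proof.
set t := 2 ^ (n + n); set N := n * n.+1; set p0 := hh t N.
exists (gg t p0 N), (2 ^ (n + p0)) => G noK noKK noS.
have HK : forall X Y : {set vert G}, t <= #|X| -> t <= #|Y| ->
    (forall x y, x \in X -> y \in Y -> adj x y) -> False.
  move=> X Y hX hY comp.
  have [[C _ [cC hC]]|[I IX [iI hI]]] := ramsey hX; first exact: noK (clique_emb cC hC).
  have [[C _ [cC hC]]|[J JY [iJ hJ]]] := ramsey hY; first exact: noK (clique_emb cC hC).
  apply: noKK (bip_emb iI iJ hI hJ _) => x y xI yJ.
  exact: comp (subsetP IX x xI) (subsetP JY y yJ).
rewrite ltnNge; apply/negP => hS.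
have [[C _ [cC hC]]|[I IS [iI hI]]] := ramsey hS; first exact: noK (clique_emb cC hC).
have [P PI cP] := subset_card hI.
have st : state t p0 N P (fun u => [set y | adj u y]).
  split.
  - by move=> x y /(subsetP PI) xI /(subsetP PI) yI; apply: iI.
  - by rewrite cP.
  - by rewrite cP.
  - by move=> u /(subsetP PI) /(subsetP IS); rewrite inE.
  - by move=> u y _; rewrite inE.
have tp : 0 < t by rewrite expn_gt0.
have hp : 0 < p0.
  rewrite /p0; clear; elim: N => [//|k IH] /=; nia.
have : 0 < #|P| by rewrite cP.
case/card_gt0P => x0 _.
have [st' [sz [gd _]]] := stars HK st.
exact: noS (good_embed x0 gd sz).
Qed.


Theorem theorem1p12 (F : gfamily) :
  (exists c1 c2 : nat, forall G : sgraph, H_free F G ->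
      #|[set v : vert G | c1 <= deg v]| < c2)
  <->
  (exists n : nat, 0 < n /\ fam_le F (special_family n)).
Proof.
split.
  by move=> [c1 [c2 H]]; exists (c1 + c2).+1; split => //; apply: easy.
move=> [n [_ hle]]; have [c1 [c2 H]] := hard n; exists c1, c2 => G hf.
have no H0 : special_family n H0 -> ~ induced_sub H0 G.
  move=> sH hi; have [H1 fH1 i1] := hle H0 sH.
  exact: hf fH1 (ind_trans i1 hi).
apply: H; apply: no; rewrite /special_family; [left | right; left | right; right]; reflexivity.
Qed.
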